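(* Let $B_J=L+U\in\mathbb R^{n\times n}$ with $L$ strictly lower triangular, $U$ strictly upper triangular, $L\ne O$ and $U^{(i)}_r\ne O$ for all $i=1,\dots,n-1$. Then the iteration matrix $T(\mathcal B_{FUTR})$ of the splitting $\mathcal B_{FUTR}=(U^{(n-1)}_r,U^{(n-2)}_r,\dots,U^{(1)}_r,L)$ and the backward Gauss–Seidel iteration matrix $B_{bGS}=(I-U)^{-1}L$ have the same nonzero eigenvalues.
   Context: For $i\in\{1,\dots,n-1\}$, $U^{(i)}_r$ is the $n\times n$ matrix whose $i$-th row agrees with the $i$-th row of $U$ in columns $j\ge i+1$ and which is zero elsewhere (the $i$-th row of $U$). For $B\in\mathbb R^{n\times n}$, a splitting of $B$ of order $d\ge1$ is an ordered $d$-tuple $\mathcal B=(B_1,\dots,B_d)$ of real $n\times n$ matrices with $B_p\neq O$ for all $p$, $\sum_{p=1}^d B_p=B$, and $B_p\circ B_q=O$ (Hadamard product) for $p\ne q$. The iteration matrix of $\mathcal B$ is the $dn\times dn$ matrix $T(\mathcal B)=(I_{dn}-\mathcal L)^{-1}\mathcal U$, where $\mathcal L,\mathcal U$ are $d\times d$ block matrices with $n\times n$ blocks, $\mathcal L_{ij}=B_j$ if $i>j$ and $O$ otherwise, $\mathcal U_{ij}=B_j$ if $i\le j$ and $O$ otherwise. *)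

(* Defs.v *)
From HB Require Import structures.
From mathcomp Require Import all_boot all_order all_algebra.
From mathcomp Require Import complex.
Set Implicit Arguments. Unset Strict Implicit. Unset Printing Implicit Defensive.
Import Order.TTheory GRing.Theory Num.Theory.
Local Open Scope ring_scope.

Section Defs.
Variable R : rcfType.

(* U^{(i)}_r, with i 1-indexed (1 <= i <= n-1): row i of U (0-indexed row
   i-1), columns j >= i+1 (1-indexed) i.e. 0-indexed column j >= i; zero
   elsewhere. *)
Definition Urow (n : nat) (U : 'M[R]_n) (i : nat) : 'M[R]_n :=
  \matrix_(k < n, j < n) (if (k.+1 == i)%N && (i <= j)%N then U k j else 0).

Definition blockL (d n : nat) (B : 'I_d -> 'M[R]_n)
  : 'M[R]_(\sum_(p < d) n, \sum_(q < d) n) :=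
  \mxblock_(p < d, q < d) (if (q < p)%N then B q else 0 : 'M[R]_n).

Definition blockU (d n : nat) (B : 'I_d -> 'M[R]_n)
  : 'M[R]_(\sum_(p < d) n, \sum_(q < d) n) :=
  \mxblock_(p < d, q < d) (if (p <= q)%N then B q else 0 : 'M[R]_n).

Definition iterT (d n : nat) (B : 'I_d -> 'M[R]_n) : 'M[R]_(\sum_(p < d) n) :=
  invmx (1%:M - blockL B) *m blockU B.

(* B_FUTR = (U^{(n-1)}_r, U^{(n-2)}_r, ..., U^{(1)}_r, L), of order n:
   position p (0-indexed) with p < n-1 holds U^{(n-1-p)}_r, position n-1 holds L *)
Definition B_FUTR (n : nat) (L U : 'M[R]_n) : 'I_n -> 'M[R]_n :=
  fun p => if (p.+1 < n)%N then Urow U (n.-1 - p) else L.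

Definition B_bGS (n : nat) (L U : 'M[R]_n) : 'M[R]_n :=
  invmx (1%:M - U) *m L.

Definition cplx_mx (m : nat) (A : 'M[R]_m) : 'M[complex R]_m :=
  map_mx (fun x : R => real_complex R x) A.

End Defs.

(* Main.v *)
Require Import Defs.
From HB Require Import structures.
From mathcomp Require Import all_boot all_order all_algebra.
From mathcomp Require Import complex.
Import Order.TTheory GRing.Theory Num.Theory.
From mathcomp Require Import zify.
Set Implicit Arguments. Unset Strict Implicit. Unset Printing Implicit Defensive.
Local Open Scope ring_scope.
Lemma eigenvalue_tr (F : fieldType) n (A : 'M[F]_n) a :
  eigenvalue A^T a = eigenvalue A a.
Proof.
rewrite !eigenvalue_root_char /char_poly.
suff -> : char_poly_mx A^T = (char_poly_mx A)^T by rewrite det_tr.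
by apply/matrixP => i j; rewrite !mxE eq_sym.
Qed.

Lemma eigen_colP (F : fieldType) n (A : 'M[F]_n) a :
  reflect (exists x : 'cV_n, x != 0 /\ A *m x = a *: x) (eigenvalue A a).
Proof.
rewrite -eigenvalue_tr; apply: (iffP eigenvalueP) => [[v hv nz]|[x [nz hx]]].
  exists v^T; split; first by rewrite trmx_eq0.
  by rewrite -[A]trmxK -trmx_mul hv linearZ.
exists x^T; last by rewrite trmx_eq0.
by rewrite -trmx_mul hx linearZ.
Qed.

Lemma eigen_invP (F : fieldType) n (A B : 'M[F]_n) a : A \in unitmx ->
  reflect (exists x : 'cV_n, x != 0 /\ B *m x = a *: (A *m x)) (eigenvalue (invmx A *m B) a).
Proof.
move=> uA; apply: (iffP (eigen_colP _ _)) => [[x [nz hx]]|[x [nz hx]]]; exists x; split => //.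
  have -> : B *m x = A *m (invmx A *m B *m x) by rewrite !mulmxA mulmxV // mul1mx.
  by rewrite hx scalemxAr.
by rewrite -mulmxA hx -scalemxAr mulmxA mulVmx // mul1mx.
Qed.
Section Core.
Variables (F : fieldType) (m k : nat) (B : 'I_m.+1 -> 'M[F]_k).
Hypothesis hBB : forall j l : 'I_m.+1, (j <= l)%N -> (l < m)%N -> B j *m B l = 0.

Definition cf (a : F) (i l : 'I_m.+1) : F := if (i <= l)%N then 1 else a.
Definition Usum := \sum_(l < m.+1 | (l < m)%N) B l.

Lemma cf_term a j l : cf a j l *: (B j *m B l) = cf a ord_max l *: (B j *m B l).
Proof.
rewrite /cf; case: (ltnP j m) => jm; last first.
  by have -> : j = ord_max by apply/val_inj/eqP; rewrite eqn_leq -ltnS ltn_ord jm.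
case: (leqP j l) => jl; last by rewrite leqNgt (ltn_trans jl jm).
case: (ltnP l m) => lm; first by rewrite hBB // !scaler0.
by [].
Qed.

Lemma sum_max a (w : 'cV[F]_k) : \sum_l cf a ord_max l *: (B l *m w) = B ord_max *m w + a *: (Usum *m w).
Proof.
rewrite (bigD1 ord_max) //= {1}/cf leqnn scale1r; congr (_ + _).
rewrite /Usum mulmx_suml scaler_sumr; apply: eq_big => l.
  by rewrite -val_eqE /= ltn_neqAle leq_ord andbT.
move=> l_neq; have lm : (l < m)%N by rewrite ltn_neqAle leq_ord andbT; exact: l_neq.
by rewrite /cf leqNgt lm.
Qed.

Lemma core_fwd a (xs : 'I_m.+1 -> 'cV[F]_k) : a != 0 ->
  (forall i, \sum_l cf a i l *: (B l *m xs l) = a *: xs i) -> ~ (forall i, xs i = 0) ->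
  exists z : 'cV[F]_k, z != 0 /\ B ord_max *m z = a *: ((1%:M - Usum) *m z).
Proof.
move=> anz E hnz.
have key j : B j *m xs j = B j *m xs ord_max.
  apply: (scalerI anz); rewrite !scalemxAr -!E !mulmx_sumr; apply: eq_bigr => l _.
  by rewrite -!scalemxAr !mulmxA [LHS]scalemxAl [RHS]scalemxAl cf_term.
have E' i : \sum_l cf a i l *: (B l *m xs ord_max) = a *: xs i.
  by rewrite -E; apply: eq_bigr => l _; rewrite key.
exists (xs ord_max); split.
  apply/eqP => z0; apply: hnz => i; apply/eqP.
  have := E' i; rewrite z0 big1 => [/esym/eqP|l _]; last by rewrite mulmx0 scaler0.
  by rewrite scaler_eq0 (negbTE anz).
have := E' ord_max; rewrite sum_max => h.
by rewrite mulmxBl mul1mx scalerBr -h addrK.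
Qed.

Lemma core_bwd a (z : 'cV[F]_k) : a != 0 -> z != 0 -> B ord_max *m z = a *: ((1%:M - Usum) *m z) ->
  exists xs : 'I_m.+1 -> 'cV[F]_k,
    (forall i, \sum_l cf a i l *: (B l *m xs l) = a *: xs i) /\ xs ord_max != 0.
Proof.
move=> anz znz hz.
have hz' : \sum_l cf a ord_max l *: (B l *m z) = a *: z.
  by rewrite sum_max hz mulmxBl mul1mx scalerBr subrK.
pose xs i := a^-1 *: \sum_l cf a i l *: (B l *m z).
have key j : B j *m xs j = B j *m z.
  apply: (scalerI anz); rewrite !scalemxAr /xs scalerA mulfV // scale1r -hz'.
  rewrite !mulmx_sumr; apply: eq_bigr => l _.
  by rewrite -!scalemxAr !mulmxA [LHS]scalemxAl [RHS]scalemxAl cf_term.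
exists xs; split.
  move=> i; rewrite /xs scalerA mulfV // scale1r; apply: eq_bigr => l _.
  by rewrite key.
by rewrite /xs hz' scalerA mulVf // scale1r.
Qed.

Definition bU := \mxblock_(p < m.+1, q < m.+1) (if (p <= q)%N then B q else 0 : 'M[F]_k).
Definition bL := \mxblock_(p < m.+1, q < m.+1) (if (q < p)%N then B q else 0 : 'M[F]_k).

Lemma scale_mxcol a (C : 'I_m.+1 -> 'cV[F]_k) :
  a *: \mxcol_i C i = \mxcol_i (a *: C i).
Proof. by apply/matrixP => i j; rewrite !mxE. Qed.

Lemma blocks a (x : 'cV[F]_(\sum_(p < m.+1) k)) :
  bU *m x + a *: (bL *m x) =
  \mxcol_i \sum_l cf a i l *: (B l *m submxcol x l).
Proof.
rewrite -{1 2}(submxcolK x) /bU /bL !mul_mxblock_mxrow scale_mxcol -mxcolD.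
apply: eq_mxcol => i; rewrite scaler_sumr -big_split; apply: eq_bigr => l _ /=.
rewrite /cf; case: leqP => il; first by rewrite mul0mx scaler0 addr0 scale1r.
by rewrite mul0mx add0r.
Qed.

Lemma block_iff a : a != 0 ->
  (exists x : 'cV[F]_(\sum_(p < m.+1) k), x != 0 /\ bU *m x = a *: ((1%:M - bL) *m x)) <->
  (exists z : 'cV[F]_k, z != 0 /\ B ord_max *m z = a *: ((1%:M - Usum) *m z)).
Proof.
move=> anz; split => [[x [xnz hx]]|[z [znz hz]]].
  apply: (@core_fwd a (submxcol x)) => //.
    move=> i; have : bU *m x + a *: (bL *m x) = a *: x.
      by rewrite hx mulmxBl mul1mx scalerBr subrK.
    rewrite blocks -{2}(submxcolK x) scale_mxcol => /eq_mxcolP; apply.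
  move=> h0; move/eqP: xnz; apply; rewrite -(submxcolK x).
  by rewrite (eq_mxcol (B_ := fun _ => 0) h0) mxcol0.
have [xs [E xsnz]] := core_bwd anz znz hz.
exists (\mxcol_i xs i); split.
  apply/eqP => h; move/eqP: xsnz; apply.
  by rewrite -(mxcolK xs ord_max) h submxcol0.
have h : bU *m \mxcol_i xs i + a *: (bL *m \mxcol_i xs i) = a *: \mxcol_i xs i.
  rewrite blocks scale_mxcol; apply: eq_mxcol => i; rewrite -E.
  by apply: eq_bigr => l _; rewrite mxcolK.
by rewrite mulmxBl mul1mx scalerBr -h addrK.
Qed.

Lemma unit_bL : (1%:M - bL) \in unitmx.
Proof.
rewrite unitmxE det_trig.
  by rewrite big1 ?unitr1 // => s _; rewrite !mxE eqxx ltnn mxE subr0.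
apply/is_trig_mxP => s t st; rewrite !mxE.
have -> : (s == t) = false by apply/eqP => e; rewrite e ltnn in st.
have : (tagnat.sig1 s <= tagnat.sig1 t)%N by apply: tagnat.le_sig1; exact: ltnW.
by rewrite leqNgt => /negbTE ->; rewrite mxE subrr.
Qed.

End Core.
Section Map.
Variable R : rcfType.

Lemma cplx_iterT d n (B : 'I_d -> 'M[R]_n) :
  cplx_mx (iterT B) =
  invmx (1%:M - \mxblock_(p < d, q < d) (if (q < p)%N then cplx_mx (B q) else 0 : 'M_n))
  *m \mxblock_(p < d, q < d) (if (p <= q)%N then cplx_mx (B q) else 0 : 'M_n).
Proof.
rewrite /cplx_mx /iterT map_mxM map_invmx map_mxB map_scalar_mx rmorph1.
congr (invmx (_ - _) *m _); apply/matrixP => i j; rewrite !mxE; case: ifP => _;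
  by rewrite !mxE.
Qed.

Lemma cplx_bGS n (L U : 'M[R]_n) :
  cplx_mx (B_bGS L U) = invmx (1%:M - cplx_mx U) *m cplx_mx L.
Proof.
by rewrite /cplx_mx /B_bGS map_mxM map_invmx map_mxB map_scalar_mx rmorph1.
Qed.

Lemma Urow_mul n (U : 'M[R]_n) a b : (b <= a)%N -> Urow U a *m Urow U b = 0.
Proof.
move=> hab; apply/matrixP => r c; rewrite !mxE big1 // => s _; rewrite !mxE.
case: andP => [[_ a_s]|_]; last by rewrite mul0r.
case: andP => [[/eqP sb _]|_]; last by rewrite mulr0.
by exfalso; move: hab a_s; rewrite -sb; lia.
Qed.

Lemma Urow_sum m (U : 'M[R]_m.+1) (hU : forall i j : 'I_m.+1, (j <= i)%N -> U i j = 0) :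
  \sum_(l < m.+1 | (l < m)%N) Urow U (m - l) = U.
Proof.
apply/matrixP => r c; rewrite summxE.
under eq_bigr do rewrite mxE.
case: (leqP c r) => cr.
  rewrite hU // big1 // => l _; case: andP => [[/eqP h1 h2]|//]; exfalso.
  by move: cr h2; rewrite -h1; lia.
have rm : (r < m)%N by move: (ltn_ord c) cr; lia.
have l0m : (m - r.+1 < m.+1)%N by lia.
rewrite (bigD1 (Ordinal l0m)) /=; last by lia.
rewrite big1 ?addr0.
  have -> : (r.+1 == m - (m - r.+1))%N && (m - (m - r.+1) <= c)%N by apply/andP; split; [apply/eqP|]; lia.
  by [].
move=> l /andP [lm ln]; case: andP => [[/eqP h1 _]|//]; exfalso.
move: ln; rewrite -val_eqE /=; move: h1 lm; lia.
Qed.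

End Map.

Theorem theorem6p3 (R : rcfType) (n : nat) (L U : 'M[R]_n)
  (hL : forall i j : 'I_n, (i <= j)%N -> L i j = 0)
  (hU : forall i j : 'I_n, (j <= i)%N -> U i j = 0)
  (hL0 : L != 0)
  (hUr : forall i : nat, (1 <= i <= n.-1)%N -> Urow U i != 0) :
  forall lam : complex R, lam != 0 ->
    eigenvalue (cplx_mx (iterT (B_FUTR L U))) lam =
    eigenvalue (cplx_mx (B_bGS L U)) lam.
Proof.
case: n L U hL hU hL0 hUr => [|m] L U hL hU hL0 hUr.
  by rewrite thinmx0 eqxx in hL0.
move=> lam lnz.
pose Bc := fun p : 'I_m.+1 => cplx_mx (B_FUTR L U p).
have hBB : forall j l : 'I_m.+1, (j <= l)%N -> (l < m)%N -> Bc j *m Bc l = 0.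
  move=> j l jl lm; rewrite /Bc /cplx_mx -map_mxM /B_FUTR.
  have jm : (j.+1 < m.+1)%N by move: jl lm; lia.
  have lm' : (l.+1 < m.+1)%N by move: lm; lia.
  by rewrite jm lm' Urow_mul ?map_mx0 //=; move: jl; lia.
have hmax : Bc ord_max = cplx_mx L by rewrite /Bc /B_FUTR /= ltnn.
have hsum : Usum Bc = cplx_mx U.
  rewrite /Usum -[in RHS](Urow_sum hU); apply/matrixP => r c.
  rewrite summxE mxE summxE rmorph_sum; apply: eq_bigr => l lm.
  have lm' : (l.+1 < m.+1)%N by move: lm; lia.
  by rewrite /Bc /B_FUTR lm' mxE.
have uU : (1%:M - cplx_mx U) \in unitmx.
  rewrite unitmxE -det_tr det_trig.
    by rewrite big1 ?unitr1 // => s _; rewrite !mxE eqxx hU // rmorph0 subr0.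
  apply/is_trig_mxP => s t st; rewrite !mxE.
  have -> : (t == s) = false by apply/eqP => e; rewrite e ltnn in st.
  by rewrite hU ?rmorph0 ?subr0 // ltnW.
rewrite cplx_iterT cplx_bGS.
apply/idP/idP.
  move/(eigen_invP _ _ (unit_bL Bc)) => h.
  have [z [znz hz]] := (block_iff hBB lnz).1 h.
  by apply/(eigen_invP _ _ uU); exists z; rewrite -hmax -hsum.
move/(eigen_invP _ _ uU) => [z [znz hz]].
apply/(eigen_invP _ _ (unit_bL Bc)); apply: (block_iff hBB lnz).2.
by exists z; rewrite hmax hsum.
Qed.
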